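(* Let $v_0\in\mathbb{R}^n$ be a unit vector, $\tau>0$, $\epsilon\ge 0$, and let $\mathbf{A}(x)$ be a homogeneous cubic polynomial such that $|\tilde{\mathbb{E}}\,\mathbf{A}(x)|\le \epsilon\tau(\tilde{\mathbb{E}}\|x\|^4)^{3/4}$ for every degree-$4$ pseudo-expectation $\tilde{\mathbb{E}}$. Let $\mathbf{T}(x)=\tau\langle v_0,x\rangle^3+\mathbf{A}(x)$, and let $\tilde{\mathbb{E}}$ be any degree-$4$ pseudo-expectation satisfying $\{\|x\|^2=1\}$ that maximizes $\tilde{\mathbb{E}}\,\mathbf{T}(x)$ among all degree-$4$ pseudo-expectations satisfying $\{\|x\|^2=1\}$. Then $v:=\tilde{\mathbb{E}}x/\|\tilde{\mathbb{E}}x\|$ (where $\tilde{\mathbb{E}}x\in\mathbb{R}^n$ has coordinates $\tilde{\mathbb{E}}x_i$) satisfies $\langle v,v_0\rangle\ge 1-O(\epsilon)$.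
   Context: A degree-$d$ pseudo-expectation ($d$ even) is a linear functional $\tilde{\mathbb{E}}:\mathbb{R}[x]_{\le d}\to\mathbb{R}$ with $\tilde{\mathbb{E}}\,1=1$ and $\tilde{\mathbb{E}}\,p(x)^2\ge 0$ for every polynomial $p$ of degree at most $d/2$. It satisfies $\{p(x)=0\}$ if $\tilde{\mathbb{E}}\,p(x)q(x)=0$ for all $q$ with $\deg(pq)\le d$. *)

(* Defs.v *)
From HB Require Import structures.
From mathcomp Require Import all_boot all_order all_algebra.
Set Implicit Arguments. Unset Strict Implicit. Unset Printing Implicit Defensive.
Import Order.TTheory GRing.Theory Num.Theory.
Local Open Scope ring_scope.

(* exponent vectors with all exponents <= 4 (covers every monomial of degree <= 4) *)
Notation mon n := {ffun 'I_n -> 'I_5}.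
Definition mdeg (n : nat) (m : mon n) : nat := (\sum_(i < n) (m i : nat))%N.
Definition mon0 (n : nat) : mon n := [ffun _ => ord0].
Definition mon_var (n : nat) (i : 'I_n) : mon n :=
  [ffun j => if j == i then inord 1 else ord0].

Notation mpoly n R := {ffun mon n -> R}.

Section Polys.
Variables (n : nat) (R : numDomainType).

Definition pC (c : R) : mpoly n R := [ffun m => if m == mon0 n then c else 0].
Definition pX (i : 'I_n) : mpoly n R := [ffun m => if m == mon_var i then 1 else 0].
(* product (exact whenever the total degree is <= 4) *)
Definition pmul (p q : mpoly n R) : mpoly n R :=
  [ffun m : mon n => \sum_(m1 : mon n) \sum_(m2 : mon n)
     (if [forall i, (m1 i + m2 i)%N == m i] then p m1 * q m2 else 0)].
(* degree of a polynomial (0 for the zero polynomial) *)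
Definition pdeg (p : mpoly n R) : nat := \max_(m | p m != 0%R) mdeg m.
Definition homog3 (p : mpoly n R) : Prop := forall m, p m != 0%R -> mdeg m = 3%N.

(* a linear functional on R[x]_{<=4}, given by its values on monomials *)
Definition pE (L : mon n -> R) (p : mpoly n R) : R :=
  \sum_(m | (mdeg m <= 4)%N) p m * L m.
Definition is_pE4 (L : mon n -> R) : Prop :=
  pE L (pC 1) = 1 /\ forall p, (pdeg p <= 2)%N -> 0 <= pE L (pmul p p).
Definition satisfies4 (L : mon n -> R) (p : mpoly n R) : Prop :=
  forall q, (pdeg p + pdeg q <= 4)%N -> pE L (pmul p q) = 0.

Definition psqnorm : mpoly n R := \sum_(i < n) pmul (pX i) (pX i).
Definition plin (v : 'I_n -> R) : mpoly n R := [ffun m : mon n => \sum_(i < n) v i * pX i m].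
Definition pscale (c : R) (p : mpoly n R) : mpoly n R := [ffun m : mon n => c * p m].
Definition pcube (p : mpoly n R) : mpoly n R := pmul p (pmul p p).
Definition dotv (u v : 'I_n -> R) : R := \sum_(i < n) u i * v i.
Definition pEx (L : mon n -> R) : 'I_n -> R := fun i => pE L (pX i).
End Polys.

(* Main.v *)
Require Import Defs.
From HB Require Import structures.
From mathcomp Require Import all_boot all_order all_algebra.
From mathcomp Require Import ring lra.
Set Implicit Arguments. Unset Strict Implicit. Unset Printing Implicit Defensive.
Import Order.TTheory GRing.Theory Num.Theory.
Local Open Scope ring_scope.

Section PRing.
Variables (n : nat) (R : rcfType).
Implicit Types (p q r : mpoly n R) (m : mon n).

Definition cnd (m1 m2 m : mon n) := [forall i, (m1 i + m2 i)%N == m i].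

Lemma pmulE p q m : pmul p q m =
  \sum_(m1 : mon n) \sum_(m2 : mon n) (if cnd m1 m2 m then p m1 * q m2 else 0).
Proof. by rewrite ffunE. Qed.

Lemma sum_mid (m1 m2 m3 m : mon n) :
  \sum_(a : mon n) (if cnd m1 m2 a && cnd a m3 m then 1 else 0 : R) =
  if [forall i, (m1 i + m2 i + m3 i)%N == m i] then 1 else 0.
Proof.
case: ifP => H.
- have Hle : forall i, (m1 i + m2 i < 5)%N.
    move=> i; move/forallP/(_ i)/eqP: H => H.
    by apply: leq_ltn_trans (ltn_ord (m i)); rewrite -H leq_addr.
  pose a0 : mon n := [ffun i => inord (m1 i + m2 i)].
  have Ha0 : cnd m1 m2 a0 && cnd a0 m3 m.
    apply/andP; split; apply/forallP => i; rewrite ffunE inordK //.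
    by move/forallP/(_ i): H.
  rewrite (bigD1 a0) //= Ha0 big1 ?addr0 // => a Hne.
  case: ifP => // /andP[/forallP H1 _]; move/eqP: Hne; case.
  apply/ffunP => i; apply/val_inj; rewrite ffunE /= inordK //.
  by move/eqP: (H1 i).
- apply: big1 => a; case: ifP => // /andP[/forallP H1 /forallP H2].
  move/negbT: H; case/forallPn => i.
  by rewrite -(eqP (H2 i)) -(eqP (H1 i)) eqxx.
Qed.

Lemma sum_mid' (m1 m2 m3 m : mon n) :
  \sum_(a : mon n) (if cnd m2 m3 a && cnd m1 a m then 1 else 0 : R) =
  if [forall i, (m1 i + m2 i + m3 i)%N == m i] then 1 else 0.
Proof.
have -> : [forall i, (m1 i + m2 i + m3 i)%N == m i] = 
          [forall i, (m2 i + m3 i + m1 i)%N == m i].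
  by apply: eq_forallb => i /=; rewrite -addnA addnC.
rewrite -sum_mid; apply: eq_bigr => a _.
have E : cnd m1 a m = cnd a m1 m by apply: eq_forallb => i /=; rewrite addnC.
by rewrite E.
Qed.

Definition c3 (m1 m2 m3 m : mon n) := [forall i, (m1 i + m2 i + m3 i)%N == m i].

Lemma pmulA_l p q r m : pmul (pmul p q) r m =
  \sum_(m1 : mon n) \sum_(m2 : mon n) \sum_(m3 : mon n)
     (if c3 m1 m2 m3 m then p m1 * q m2 * r m3 else 0).
Proof.
rewrite pmulE.
transitivity (\sum_(a : mon n) \sum_(m3 : mon n) \sum_(m1 : mon n) \sum_(m2 : mon n)
   (if cnd m1 m2 a && cnd a m3 m then p m1 * q m2 * r m3 else 0)).
  apply: eq_bigr => a _; apply: eq_bigr => m3 _; rewrite pmulE.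
  case: ifP => h; last by rewrite big1 // => m1 _; rewrite big1 // => m2 _; rewrite andbF.
  rewrite mulr_suml; apply: eq_bigr => m1 _; rewrite mulr_suml; apply: eq_bigr => m2 _.
  by rewrite andbT; case: ifP; rewrite ?mul0r.
rewrite exchange_big /=.
transitivity (\sum_(m3 : mon n) \sum_(m1 : mon n) \sum_(m2 : mon n) \sum_(a : mon n)
   (if cnd m1 m2 a && cnd a m3 m then p m1 * q m2 * r m3 else 0)).
  apply: eq_bigr => m3 _; rewrite exchange_big /=; apply: eq_bigr => m1 _.
  by rewrite exchange_big.
rewrite exchange_big /=; apply: eq_bigr => m1 _.
rewrite exchange_big /=; apply: eq_bigr => m2 _; apply: eq_bigr => m3 _.
transitivity (p m1 * q m2 * r m3 *
   \sum_(a : mon n) (if cnd m1 m2 a && cnd a m3 m then 1 else 0 : R)).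
  by rewrite mulr_sumr; apply: eq_bigr => a _; case: ifP; rewrite ?mulr1 ?mulr0.
by rewrite sum_mid /c3; case: ifP; rewrite ?mulr1 ?mulr0.
Qed.

Lemma pmulA_r p q r m : pmul p (pmul q r) m =
  \sum_(m1 : mon n) \sum_(m2 : mon n) \sum_(m3 : mon n)
     (if c3 m1 m2 m3 m then p m1 * q m2 * r m3 else 0).
Proof.
rewrite pmulE.
transitivity (\sum_(m1 : mon n) \sum_(b : mon n) \sum_(m2 : mon n) \sum_(m3 : mon n)
   (if cnd m2 m3 b && cnd m1 b m then p m1 * q m2 * r m3 else 0)).
  apply: eq_bigr => m1 _; apply: eq_bigr => b _; rewrite pmulE.
  case: ifP => h; last by rewrite big1 // => m2 _; rewrite big1 // => m3 _; rewrite andbF.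
  rewrite mulr_sumr; apply: eq_bigr => m2 _; rewrite mulr_sumr; apply: eq_bigr => m3 _.
  by rewrite andbT; case: ifP; rewrite ?mulr0 // mulrA.
apply: eq_bigr => m1 _.
rewrite exchange_big /=; apply: eq_bigr => m2 _.
rewrite exchange_big /=; apply: eq_bigr => m3 _.
transitivity (p m1 * q m2 * r m3 *
   \sum_(a : mon n) (if cnd m2 m3 a && cnd m1 a m then 1 else 0 : R)).
  by rewrite mulr_sumr; apply: eq_bigr => a _; case: ifP; rewrite ?mulr1 ?mulr0.
by rewrite sum_mid' /c3; case: ifP; rewrite ?mulr1 ?mulr0.
Qed.

Lemma pmulA : associative (@pmul n R).
Proof. by move=> p q r; apply/ffunP => m; rewrite pmulA_l pmulA_r. Qed.

Lemma pmulC : commutative (@pmul n R).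
Proof.
move=> p q; apply/ffunP => m; rewrite !pmulE exchange_big /=.
apply: eq_bigr => m1 _; apply: eq_bigr => m2 _.
have -> : cnd m2 m1 m = cnd m1 m2 m by apply: eq_forallb => i; rewrite addnC.
by rewrite mulrC.
Qed.

Lemma cnd0 m2 m : cnd (mon0 n) m2 m = (m2 == m).
Proof.
apply/forallP/eqP => [H|->]; last by move=> i; rewrite ffunE add0n.
apply/ffunP => i; apply/val_inj; move: (H i); rewrite ffunE add0n => /eqP //.
Qed.

Lemma pmul1 : left_id (pC n (1:R)) (@pmul n R).
Proof.
move=> p; apply/ffunP => m; rewrite pmulE (bigD1 (mon0 n)) //=.
rewrite [X in _ + X]big1 ?addr0; last first.
  move=> m1 /negbTE Hm; apply: big1 => m2 _; rewrite ffunE Hm mul0r; by case: ifP.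
rewrite (bigD1 m) //= [X in _ + X]big1 ?addr0; first by rewrite cnd0 eqxx ffunE eqxx mul1r.
by move=> m2 /negbTE Hm; rewrite cnd0 Hm.
Qed.

Lemma pmulDl : left_distributive (@pmul n R) +%R.
Proof.
move=> p q r; apply/ffunP => m; rewrite [RHS]ffunE !pmulE -big_split /=.
apply: eq_bigr => m1 _; rewrite -big_split /=; apply: eq_bigr => m2 _.
by rewrite ffunE; case: ifP; rewrite ?addr0 // mulrDl.
Qed.

Lemma pC1_neq0 : pC n (1:R) != 0.
Proof. apply/eqP => /ffunP /(_ (mon0 n)); rewrite !ffunE eqxx => /eqP; by rewrite oner_eq0. Qed.

Definition tp := mpoly n R.
HB.instance Definition _ := GRing.Zmodule.on tp.
HB.instance Definition _ := GRing.Zmodule_isComNzRing.Build tp pmulA pmulC pmul1 pmulDl pC1_neq0.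

Lemma tp_mulE (p q : tp) : p * q = pmul p q. Proof. by []. Qed.
Lemma tp_oneE : (1 : tp) = pC n 1. Proof. by []. Qed.

Implicit Types (L : mon n -> R) (a b c : R).
Local Notation E := (@pE n R).

Lemma tp_sumE I (r : seq I) (F : I -> tp) m : (\sum_(i <- r) F i : tp) m = \sum_(i <- r) F i m.
Proof.
elim: r => [|i r IH]; first by rewrite !big_nil ffunE.
by rewrite !big_cons ffunE IH.
Qed.

Lemma pED L (p q : tp) : E L (p + q) = E L p + E L q.
Proof. rewrite /pE -big_split /=; apply: eq_bigr => m _; by rewrite !ffunE mulrDl. Qed.
Lemma pEN L (p : tp) : E L (- p) = - E L p.
Proof. rewrite /pE -sumrN /=; apply: eq_bigr => m _; by rewrite !ffunE mulNr. Qed.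
Lemma pEB L (p q : tp) : E L (p - q) = E L p - E L q.
Proof. by rewrite pED pEN. Qed.
Lemma pEMn L (p : tp) k : E L (p *+ k) = E L p *+ k.
Proof. elim: k => [|k IH]; first by rewrite !mulr0n /pE big1 // => m _; rewrite ffunE mul0r.
by rewrite !mulrS pED IH. Qed.
Lemma pEsum L I (r : seq I) (F : I -> tp) : E L (\sum_(i <- r) F i) = \sum_(i <- r) E L (F i).
Proof.
elim: r => [|i r IH]; first by rewrite !big_nil /pE big1 // => m _; rewrite ffunE mul0r.
by rewrite !big_cons pED IH.
Qed.
Lemma pmulCl c (p : mpoly n R) : pmul (pC n c) p = pscale c p.
Proof.
apply/ffunP => m; rewrite pmulE (bigD1 (mon0 n)) //=.
rewrite [X in _ + X]big1 ?addr0; last first.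
  move=> m1 /negbTE Hm; apply: big1 => m2 _; rewrite ffunE Hm mul0r; by case: ifP.
rewrite (bigD1 m) //= [X in _ + X]big1 ?addr0; first by rewrite cnd0 eqxx !ffunE eqxx.
by move=> m2 /negbTE Hm; rewrite cnd0 Hm.
Qed.
Lemma pEscale L c (p : mpoly n R) : E L (pscale c p) = c * E L p.
Proof. rewrite /pE mulr_sumr; apply: eq_bigr => m _; by rewrite ffunE mulrA. Qed.
Lemma pEC L c (p : tp) : E L ((pC n c : tp) * p) = c * E L p.
Proof. by rewrite tp_mulE pmulCl pEscale. Qed.
Lemma pCM a b : (pC n a : tp) * pC n b = pC n (a * b).
Proof. rewrite tp_mulE pmulCl; apply/ffunP => m; rewrite !ffunE; by case: ifP; rewrite ?mulr0. Qed.
Lemma pCD a b : (pC n a : tp) + pC n b = pC n (a + b).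
Proof. apply/ffunP => m; rewrite !ffunE; by case: ifP; rewrite ?addr0. Qed.
Lemma pCsum I (r : seq I) (F : I -> R) : (\sum_(i <- r) pC n (F i) : tp) = pC n (\sum_(i <- r) F i).
Proof.
elim: r => [|i r IH]; first by rewrite !big_nil; apply/ffunP => m; rewrite !ffunE; case: ifP.
by rewrite !big_cons IH pCD.
Qed.
Lemma pE1 L c : E L (pC n c : tp) = c * E L (1 : tp).
Proof. by rewrite -pEC mulr1. Qed.


Definition deg_le d (p : mpoly n R) := forall m, p m != 0 -> (mdeg m <= d)%N.

Lemma pdeg_le d (p : mpoly n R) : deg_le d p -> (pdeg p <= d)%N.
Proof. by move=> H; apply/bigmax_leqP => m; apply: H. Qed.
Lemma deg_le_pdeg (p : mpoly n R) : deg_le (pdeg p) p.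
Proof. move=> m Hm; rewrite /pdeg; exact: (@leq_bigmax_cond _ (fun m => p m != 0) (fun m => mdeg m) m Hm). Qed.
Lemma deg_le_pdeg' d (p : mpoly n R) : (pdeg p <= d)%N -> deg_le d p.
Proof. by move=> H m /(deg_le_pdeg) Hm; apply: leq_trans H. Qed.
Lemma deg_le_mono d d' (p : mpoly n R) : (d <= d')%N -> deg_le d p -> deg_le d' p.
Proof. by move=> Hd H m /H Hm; apply: leq_trans Hd. Qed.
Lemma deg_leD d (p q : tp) : deg_le d p -> deg_le d q -> deg_le d (p + q).
Proof.
move=> Hp Hq m; rewrite ffunE; case: (eqVneq (p m) 0) => [->|/Hp //]; rewrite add0r; exact: Hq.
Qed.
Lemma deg_leN d (p : tp) : deg_le d p -> deg_le d (- p).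
Proof. by move=> Hp m; rewrite ffunE oppr_eq0; apply: Hp. Qed.
Lemma deg_leB d (p q : tp) : deg_le d p -> deg_le d q -> deg_le d (p - q).
Proof. by move=> Hp Hq; apply: deg_leD => //; apply: deg_leN. Qed.
Lemma mdeg_cnd m1 m2 m : cnd m1 m2 m -> mdeg m = (mdeg m1 + mdeg m2)%N.
Proof. by move=> /forallP H; rewrite /mdeg -big_split; apply: eq_bigr => i _; rewrite -(eqP (H i)). Qed.
Lemma deg_leM d1 d2 (p q : tp) : deg_le d1 p -> deg_le d2 q -> deg_le (d1 + d2) (p * q).
Proof.
move=> Hp Hq m; apply: contraR => Hm; rewrite tp_mulE pmulE; apply/eqP.
apply: big1 => m1 _; apply: big1 => m2 _; case: ifP => // Hc.
case: (eqVneq (p m1) 0) => [->|H1]; first by rewrite mul0r.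
case: (eqVneq (q m2) 0) => [->|H2]; first by rewrite mulr0.
by move: Hm; rewrite (mdeg_cnd Hc) leq_add ?Hp ?Hq.
Qed.
Lemma deg_le_sum d I (r : seq I) (F : I -> tp) :
  (forall i, deg_le d (F i)) -> deg_le d (\sum_(i <- r) F i).
Proof.
move=> H; elim: r => [|i r IH]; last by rewrite big_cons; apply: deg_leD.
by rewrite big_nil => m; rewrite ffunE eqxx.
Qed.
Lemma mdeg0 : mdeg (mon0 n) = 0%N.
Proof. by rewrite /mdeg big1 // => i _; rewrite ffunE. Qed.
Lemma deg_le_pC c : deg_le 0 (pC n c).
Proof. by move=> m; rewrite ffunE; case: ifP => [/eqP->|]; rewrite ?mdeg0 // eqxx. Qed.
Lemma mdeg_var (i : 'I_n) : mdeg (mon_var i) = 1%N.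
Proof.
rewrite /mdeg (bigD1 i) //= big1 => [|j /negbTE Hj]; last by rewrite ffunE Hj.
by rewrite ffunE eqxx inordK.
Qed.
Lemma deg_le_pX (i : 'I_n) : deg_le 1 (pX R i).
Proof. by move=> m; rewrite ffunE; case: ifP => [/eqP->|]; rewrite ?mdeg_var // eqxx. Qed.
Lemma deg_le_mul_C c d (p : tp) : deg_le d p -> deg_le d ((pC n c : tp) * p).
Proof. by move=> H; rewrite -[d]add0n; apply: deg_leM => //; apply: deg_le_pC. Qed.
Lemma deg_le1 : deg_le 0 (1 : tp).
Proof. exact: deg_le_pC. Qed.


Section Ev.
Variable v0 : 'I_n -> R.
Definition L0 (m : mon n) : R := \prod_i v0 i ^+ m i.
Definition ev (p : mpoly n R) : R := \sum_m p m * L0 m.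

Lemma evD (p q : tp) : ev (p + q) = ev p + ev q.
Proof. rewrite /ev -big_split /=; apply: eq_bigr => m _; by rewrite !ffunE mulrDl. Qed.
Lemma evN (p : tp) : ev (- p) = - ev p.
Proof. rewrite /ev -sumrN /=; apply: eq_bigr => m _; by rewrite !ffunE mulNr. Qed.
Lemma evB (p q : tp) : ev (p - q) = ev p - ev q.
Proof. by rewrite evD evN. Qed.
Lemma ev_sum I (r : seq I) (F : I -> tp) : ev (\sum_(i <- r) F i) = \sum_(i <- r) ev (F i).
Proof.
elim: r => [|i r IH]; first by rewrite !big_nil /ev big1 // => m _; rewrite ffunE mul0r.
by rewrite !big_cons evD IH.
Qed.
Lemma L00 : L0 (mon0 n) = 1.
Proof. by rewrite /L0 big1 // => i _; rewrite ffunE expr0. Qed.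
Lemma evC c : ev (pC n c) = c.
Proof.
rewrite /ev (bigD1 (mon0 n)) //= big1 ?addr0 => [|m /negbTE Hm]; last by rewrite ffunE Hm mul0r.
by rewrite ffunE eqxx L00 mulr1.
Qed.
Lemma evX (i : 'I_n) : ev (pX R i) = v0 i.
Proof.
rewrite /ev (bigD1 (mon_var i)) //= big1 ?addr0 => [|m /negbTE Hm]; last by rewrite ffunE Hm mul0r.
rewrite ffunE eqxx mul1r /L0 (bigD1 i) //= big1 ?mulr1 => [|j /negbTE Hj]; last by rewrite ffunE Hj expr0.
by rewrite ffunE eqxx inordK.
Qed.
Lemma evCM c (p : tp) : ev ((pC n c : tp) * p) = c * ev p.
Proof. rewrite tp_mulE pmulCl /ev mulr_sumr; apply: eq_bigr => m _; by rewrite ffunE mulrA. Qed.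

Lemma L0_cnd m1 m2 m : cnd m1 m2 m -> L0 m = L0 m1 * L0 m2.
Proof.
move=> /forallP H; rewrite /L0 -big_split /=; apply: eq_bigr => i _.
by rewrite -exprD (eqP (H i)).
Qed.

Lemma sum_cnd m1 m2 : (forall i, (m1 i + m2 i < 5)%N) ->
  \sum_m (if cnd m1 m2 m then L0 m else 0) = L0 m1 * L0 m2.
Proof.
move=> Hle; pose a0 : mon n := [ffun i => inord (m1 i + m2 i)].
have Ha0 : cnd m1 m2 a0 by apply/forallP => i; rewrite ffunE inordK.
rewrite (bigD1 a0) //= Ha0 big1 ?addr0; first exact: L0_cnd.
move=> a Hne; case: ifP => // /forallP H1; move/eqP: Hne; case.
apply/ffunP => i; apply/val_inj; rewrite ffunE /= inordK //.
by move/eqP: (H1 i).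
Qed.

Lemma mon_le_mdeg m i : (m i <= mdeg m)%N.
Proof. by rewrite /mdeg (bigD1 i) //= leq_addr. Qed.

Lemma ev_mul d1 d2 (p q : tp) : deg_le d1 p -> deg_le d2 q -> (d1 + d2 <= 4)%N ->
  ev (p * q) = ev p * ev q.
Proof.
move=> Hp Hq Hd.
rewrite /ev tp_mulE.
transitivity (\sum_m \sum_m1 \sum_m2 (if cnd m1 m2 m then p m1 * q m2 * L0 m else 0)).
  apply: eq_bigr => m _; rewrite pmulE mulr_suml; apply: eq_bigr => m1 _.
  rewrite mulr_suml; apply: eq_bigr => m2 _; by case: ifP; rewrite ?mul0r.
rewrite exchange_big /= mulr_suml; apply: eq_bigr => m1 _.
rewrite exchange_big /= mulr_sumr; apply: eq_bigr => m2 _.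
case: (eqVneq (p m1) 0) => [->|H1].
  rewrite big1; first by rewrite ?mul0r ?mulr0.
  by move=> m _; case: ifP; rewrite ?mul0r ?mulr0.
case: (eqVneq (q m2) 0) => [->|H2].
  rewrite big1; first by rewrite ?mul0r ?mulr0.
  by move=> m _; case: ifP; rewrite ?mulr0 ?mul0r.
have Hle : forall i, (m1 i + m2 i < 5)%N.
  move=> i; apply: (@leq_ltn_trans (d1 + d2)); last by apply: leq_ltn_trans Hd _.
  apply: leq_add; [apply: leq_trans (Hp _ H1) | apply: leq_trans (Hq _ H2)]; exact: mon_le_mdeg.
transitivity (p m1 * q m2 * \sum_m (if cnd m1 m2 m then L0 m else 0)).
  rewrite mulr_sumr; apply: eq_bigr => m _; by case: ifP; rewrite ?mulr0.
rewrite sum_cnd //; ring.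
Qed.

Lemma pE_ev (p : mpoly n R) : deg_le 4 p -> pE L0 p = ev p.
Proof.
move=> H; rewrite /ev (bigID (fun m => mdeg m <= 4)%N) /= [X in _ + X]big1 ?addr0 //.
move=> m Hm; case: (eqVneq (p m) 0) => [->|/H]; first by rewrite mul0r.
by rewrite (negbTE Hm).
Qed.
End Ev.


Lemma arith1 (a b eps : R) : 0 <= 1 *+ 2 - b *+ 8 + a *+ 6 -> 1 - 2%:R * eps <= b ->
  3%:R - 8%:R * eps <= 3%:R * a.
Proof. lra. Qed.

Lemma arith3 (a N eps : R) : 0 <= eps -> 0 <= N -> N <= 1 -> a ^+ 2 <= N ->
  3%:R - 8%:R * eps <= 3%:R * a -> 1 - 8%:R * eps <= a / Num.sqrt N.
Proof.
move=> He HN0 HN1 Ha Hy.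
have r0 : 0 <= Num.sqrt N := sqrtr_ge0 N.
have rr : Num.sqrt N ^+ 2 = N := sqr_sqrtr HN0.
have r1 : Num.sqrt N <= 1 by rewrite -sqrtr1 ler_sqrt ?ler01.
move: r0 rr r1; set r := Num.sqrt N => r0 rr r1.
have [r00|rpos] := eqVneq r 0.
  rewrite r00 invr0 mulr0.
  have a0 : a = 0.
    apply/eqP; rewrite -sqrf_eq0 eq_le sqr_ge0 andbT.
    by rewrite -rr r00 expr0n /= in Ha.
  move: Hy; rewrite a0; lra.
have rp : 0 < r by rewrite lt_def rpos r0.
have aE : a = a / r * r by rewrite divfK.
move: aE; set z := a / r => aE.
have [a0|a0] := leP 0 a.
  have z0 : 0 <= z by rewrite /z divr_ge0.
  have : z * r <= z by rewrite ler_piMr.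
  rewrite -aE; lra.
have zz : z ^+ 2 <= 1.
  have H : (z * r) ^+ 2 <= r ^+ 2 by rewrite -aE rr.
  move: H; rewrite exprMn -{2}[r ^+ 2]mul1r ler_pM2r // exprn_gt0 //.
have zm1 : -1 <= z by nra.
lra.
Qed.

Lemma arith2 (u X : R) : 0 <= X - (u * u) *+ 2 + u * (u * 1) -> u * u <= X.
Proof. lra. Qed.

Lemma main_sec (v0 : 'I_n -> R) tau eps (A : mpoly n R) (L : mon n -> R) :
  dotv v0 v0 = 1 -> 0 < tau -> 0 <= eps -> homog3 A ->
  (forall L' : mon n -> R, is_pE4 L' ->
       `|pE L' A| <= eps * tau * Num.sqrt (Num.sqrt (pE L' (pmul (psqnorm n R) (psqnorm n R)))) ^+ 3) ->
  is_pE4 L -> satisfies4 L (psqnorm n R - pC n 1) ->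
  (forall L' : mon n -> R, is_pE4 L' -> satisfies4 L' (psqnorm n R - pC n 1) ->
      pE L' (pscale tau (pcube (plin v0)) + A) <= pE L (pscale tau (pcube (plin v0)) + A)) ->
  1 - 8%:R * eps <= dotv (fun i => pEx L i / Num.sqrt (dotv (pEx L) (pEx L))) v0.
Proof.
move=> Hv Htau Heps HA3 HA [HL1 HLsq] HLsat Hopt.
pose x := fun i => (pX R i : tp).
pose s : tp := psqnorm n R.
have s_def : s = \sum_i x i * x i by [].
pose y : tp := plin v0.
have y_def : y = \sum_i (pC n (v0 i) : tp) * x i.
  change (plin v0 = (\sum_i (pC n (v0 i) : tp) * x i : mpoly n R)).
  apply/ffunP => m; rewrite ffunE tp_sumE; apply: eq_bigr => i _.
  by rewrite tp_mulE pmulCl [RHS]ffunE.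
have dx : forall i, deg_le 1 (x i) by move=> i; apply: deg_le_pX.
have dy : deg_le 1 y by rewrite y_def; apply: deg_le_sum => i; apply: deg_le_mul_C.
have ds : deg_le 2 s by rewrite s_def; apply: deg_le_sum => i; apply: (deg_leM (dx i) (dx i)).
have d1 : forall d, deg_le d (1 : tp) by move=> d; apply: deg_le_mono deg_le1.
have dsph : deg_le 2 (s - 1) by apply: deg_leB.
have dA : deg_le 4 A by move=> m /HA3 ->.
have E1 : pE L (1 : tp) = 1 by [].
have Esq : forall p : tp, deg_le 2 p -> 0 <= pE L (p * p).
  by move=> p Hp; apply: HLsq; apply: pdeg_le.
have Esat : forall q : tp, deg_le 2 q -> pE L ((s - 1) * q) = 0.
  move=> q Hq; apply: HLsat.
  exact: (leq_add (pdeg_le dsph) (pdeg_le Hq)).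
have Es : pE L s = 1.
  have := Esat 1 (d1 2%N); rewrite mulr1 pEB E1 => /eqP; rewrite subr_eq0 => /eqP //.
have Ess : pE L (s * s) = 1.
  have := Esat s ds; rewrite mulrBl mul1r pEB Es => /eqP; rewrite subr_eq0 => /eqP //.
have EA : `|pE L A| <= eps * tau.
  have := HA L (conj HL1 HLsq); rewrite [pmul _ _](_ : _ = s * s) // Ess sqrtr1 sqrtr1 expr1n mulr1 //.
have ET : pE L (pscale tau (pcube (plin v0)) + A) = tau * pE L (y * (y * y)) + pE L A.
  by rewrite (pED L (pscale tau (pcube (plin v0)) : tp) A) pEscale.
have evy : ev v0 y = 1.
  rewrite y_def ev_sum -Hv; apply: eq_bigr => i _; by rewrite evCM evX.
have evs : ev v0 s = 1.
  rewrite s_def ev_sum -Hv; apply: eq_bigr => i _; by rewrite (ev_mul _ (dx i) (dx i)) // evX.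
have P0 : is_pE4 (L0 v0).
  split; first by rewrite pE_ev ?evC //; apply: deg_le_mono (deg_le_pC _).
  move=> p /deg_le_pdeg' Hp.
  have Hp2 : deg_le 2 p by apply: deg_le_mono Hp.
  rewrite (pE_ev _ (deg_leM Hp2 Hp2)) (ev_mul _ Hp2 Hp2) //.
  by rewrite -expr2 sqr_ge0.
have S0 : satisfies4 (L0 v0) (psqnorm n R - pC n 1).
  move=> q Hq.
  have H1 := @deg_le_pdeg (psqnorm n R - pC n 1).
  have H2 := @deg_le_pdeg q.
  rewrite (pE_ev _ (deg_le_mono Hq (deg_leM H1 H2))).
  rewrite (ev_mul _ H1 H2 Hq).
  by rewrite (evB v0 s 1) evs evC subrr mul0r.
have EA0 : `|pE (L0 v0) A| <= eps * tau.
  have := HA _ P0; rewrite [pmul _ _](_ : _ = s * s) //.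
  rewrite (pE_ev _ (deg_leM ds ds)) (ev_mul _ ds ds) // evs mulr1 sqrtr1 sqrtr1 expr1n mulr1 //.
have ET0 : pE (L0 v0) (pscale tau (pcube (plin v0)) + A) = tau + pE (L0 v0) A.
  rewrite (pED _ (pscale tau (pcube (plin v0)) : tp) A) pEscale.
  have dyy : deg_le 2 (y * y) by apply: (deg_leM dy dy).
  rewrite [pcube _](_ : _ = y * (y * y)) // (pE_ev _ (deg_le_mono _ (deg_leM dy dyy))) //.
  by rewrite (ev_mul _ dy dyy) // (ev_mul _ dy dy) // evy !mulr1.
have Hy3 : 1 - 2%:R * eps <= pE L (y * (y * y)).
  have := Hopt _ P0 S0; rewrite ET ET0 => Hle.
  have H1 : 0 <= tau * (pE L (y * (y * y)) - 1 + 2%:R * eps).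
    move: EA EA0 Hle; rewrite !ler_norml => /andP[? ?] /andP[? ?] ?; nra.
  rewrite -subr_ge0; move: H1; rewrite pmulr_rge0 //; lra.
pose c := fun i => (pC n (v0 i) : tp).
have sumc : \sum_i c i * c i = 1.
  rewrite /c (eq_bigr (fun i => pC n (v0 i * v0 i))) => [|i _]; last by rewrite pCM.
  by rewrite pCsum -/(dotv v0 v0) Hv.
have Lag : \sum_i (x i - y * c i) * (x i - y * c i) = s - y * y.
  rewrite (eq_bigr (fun i => x i * x i - (y * (c i * x i)) *+ 2 + y * y * (c i * c i)))
    => [|i _]; last by ring.
  rewrite big_split sumrB /= sumrMnl -mulr_sumr -mulr_sumr sumc -s_def -y_def.
  ring.
pose w : tp := 1 + y + y.
have dw : deg_le 1 w by apply: deg_leD; [apply: deg_leD|] => //; apply: d1.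
have Ident : 1 *+ 2 - (y * (y * y)) *+ 8 + y *+ 6 =
   ((1 - y) * w) * ((1 - y) * w) - (s - 1) * (w * w)
   + \sum_i ((x i - y * c i) * w) * ((x i - y * c i) * w).
  rewrite (eq_bigr (fun i => (x i - y * c i) * (x i - y * c i) * (w * w))) => [|i _]; last by ring.
  rewrite -mulr_suml Lag /w; ring.
have Hsos : 0 <= 1 *+ 2 - pE L (y * (y * y)) *+ 8 + pE L y *+ 6.
  have HI := congr1 (pE L) Ident; rewrite !pED !pEN !pEMn E1 in HI.
  rewrite HI (Esat _ (deg_leM dw dw)) subr0.
  apply: addr_ge0.
    apply: Esq; rewrite -[2%N]/(1 + 1)%N; apply: deg_leM dw.
    by apply: deg_leB => //; apply: d1.
  rewrite pEsum; apply: sumr_ge0 => i _; apply: Esq.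
  rewrite -[2%N]/(1 + 1)%N; apply: deg_leM dw; apply: deg_leB; first exact: dx.
  exact: (deg_leM dy (@deg_le_pC (v0 i))).
have Hy : 3%:R - 8%:R * eps <= 3%:R * pE L y.
  exact: arith1 Hsos Hy3.
pose u := pEx L.
have Eyu : pE L y = dotv u v0.
  rewrite y_def pEsum /dotv; apply: eq_bigr => i _; by rewrite pEC mulrC.
have Hui : forall i, u i * u i <= pE L (x i * x i).
  move=> i; apply: arith2.
  have H := Esq (x i - pC n (u i)) (deg_leB (deg_le_mono (leqnSn 1) (dx i)) (deg_le_mono (leq0n 2) (@deg_le_pC (u i)))).
  rewrite (_ : (x i - pC n (u i)) * (x i - pC n (u i)) = x i * x i - ((pC n (u i) : tp) * x i) *+ 2 + (pC n (u i) : tp) * ((pC n (u i) : tp) * 1)) in H; last by ring.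
  by rewrite !pED !pEN !pEMn !pEC E1 in H.
have HN : dotv u u <= 1.
  rewrite -Es s_def pEsum; apply: ler_sum => i _; exact: Hui.
have HN0 : 0 <= dotv u u by apply: sumr_ge0 => i _; rewrite -expr2 sqr_ge0.
have Ha2 : dotv u v0 ^+ 2 <= dotv u u.
  set a := dotv u v0.
  have H0 : 0 <= \sum_i (u i - a * v0 i) ^+ 2 by apply: sumr_ge0 => i _; apply: sqr_ge0.
  rewrite (eq_bigr (fun i => u i * u i - (a * (u i * v0 i)) *+ 2 + a * a * (v0 i * v0 i))) in H0; last by move=> i _; ring.
  rewrite big_split sumrB /= sumrMnl -!mulr_sumr -/(dotv u u) -/(dotv u v0) -/a -/(dotv v0 v0) Hv in H0.
  move: H0; clear; lra.
have Hz : dotv (fun i => pEx L i / Num.sqrt (dotv (pEx L) (pEx L))) v0 = dotv u v0 / Num.sqrt (dotv u u).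
  rewrite /dotv mulr_suml; apply: eq_bigr => i _; by rewrite mulrAC.
rewrite Hz; apply: arith3 => //; by rewrite -Eyu.
Qed.

End PRing.

Theorem mainTheorem3 :
  exists C : nat,
  forall (R : rcfType) (n : nat) (v0 : 'I_n -> R) (tau eps : R)
         (A : mpoly n R) (L : mon n -> R),
    dotv v0 v0 = 1 ->
    0 < tau -> 0 <= eps ->
    homog3 A ->
    (forall L' : mon n -> R, is_pE4 L' ->
       `|pE L' A| <= eps * tau * Num.sqrt (Num.sqrt (pE L' (pmul (psqnorm n R) (psqnorm n R)))) ^+ 3) ->
    let T := pscale tau (pcube (plin v0)) + A in
    let sphere := psqnorm n R - pC n 1 in
    is_pE4 L -> satisfies4 L sphere ->
    (forall L' : mon n -> R, is_pE4 L' -> satisfies4 L' sphere -> pE L' T <= pE L T) ->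
    let v := fun i => pEx L i / Num.sqrt (dotv (pEx L) (pEx L)) in
    1 - C%:R * eps <= dotv v v0.
Proof.
exists 8%N => R n v0 tau eps A L Hv Ht He HA3 HA T sphere HL HS Hopt.
exact: (@main_sec n R v0 tau eps A L Hv Ht He HA3 HA HL HS Hopt).
Qed.
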